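(* If a sequent $\Gamma\Rightarrow\Delta$ is provable in $\mathsf{Grz}_\infty$, then $\Gamma\Rightarrow\Delta$ has a slim $\infty$-proof in $\mathsf{Grz}_\infty$.
   Context: Formulas are built from $\bot$ and atomic propositions using $\to$ and $\Box$. A sequent is $\Gamma\Rightarrow\Delta$ with $\Gamma,\Delta$ finite multisets of formulas; $\Box\Pi$ denotes the multiset $\{\Box B:B\in\Pi\}$. The calculus $\mathsf{Grz}_\infty$ has initial sequents $\Gamma,p\Rightarrow p,\Delta$ ($p$ atomic) and $\Gamma,\bot\Rightarrow\Delta$, and rules: $(\to_L)$ from $\Gamma,B\Rightarrow\Delta$ and $\Gamma\Rightarrow A,\Delta$ infer $\Gamma,A\to B\Rightarrow\Delta$; $(\to_R)$ from $\Gamma,A\Rightarrow B,\Delta$ infer $\Gamma\Rightarrow A\to B,\Delta$; $(\mathsf{refl})$ from $\Gamma,B,\Box B\Rightarrow\Delta$ infer $\Gamma,\Box B\Rightarrow\Delta$; $(\Box)$ from left premise $\Gamma,\Box\Pi\Rightarrow A,\Delta$ and right premise $\Box\Pi\Rightarrow A$ infer $\Gamma,\Box\Pi\Rightarrow\Box A,\Delta$. An $\infty$-proof is a possibly infinite tree of sequents built by these rules, with leaves labelled by initial sequents, in which every infinite branch passes through a right premise of $(\Box)$ infinitely often; a sequent is provable if it labels the root of an $\infty$-proof. An application of $(\Box)$ is slim if the multiset $\Pi$ in it is a set (contains no formula more than once); an $\infty$-proof is slim if every application of $(\Box)$ in it is slim. *)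

(* Defs.v *)
From HB Require Import structures.
From mathcomp Require Import all_boot.
Set Implicit Arguments. Unset Strict Implicit. Unset Printing Implicit Defensive.

Inductive form : Type :=
| Bot : form
| Var : nat -> form
| Imp : form -> form -> form
| Box : form -> form.

Definition form_eq_dec (x y : form) : {x = y} + {x <> y}.
Proof. decide equality; exact: (decP eqP). Defined.

HB.instance Definition _ := comparableMixin form_eq_dec.

(* A sequent Gamma => Delta; the finite multisets are represented by lists,
   and all rule conditions are stated up to permutation (perm_eq). *)
Definition sequent := (seq form * seq form)%type.

Inductive rule : Type :=
| RAxAt  : nat -> rule                 (* Gamma, p => p, Delta *)
| RAxBot : rule                        (* Gamma, bot => Delta *)
| RImpL  : form -> form -> rule
| RImpR  : form -> form -> rule
| RRefl  : form -> rule                (* principal Box B on the left *)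
| RBox   : seq form -> form -> rule.   (* multiset Pi and principal Box A *)

Definition arity (r : rule) : nat :=
  match r with
  | RAxAt _ | RAxBot => 0
  | RImpL _ _ => 2
  | RImpR _ _ => 1
  | RRefl _ => 1
  | RBox _ _ => 2   (* premise 0 = left premise, premise 1 = right premise *)
  end.

Definition local_ok (s : sequent) (r : rule) (ch : nat -> sequent) : Prop :=
  match r with
  | RAxAt p => Var p \in s.1 /\ Var p \in s.2
  | RAxBot => Bot \in s.1
  | RImpL A B => exists G, perm_eq s.1 (Imp A B :: G) /\
        perm_eq (ch 0).1 (B :: G) /\ perm_eq (ch 0).2 s.2 /\
        perm_eq (ch 1).1 G /\ perm_eq (ch 1).2 (A :: s.2)
  | RImpR A B => exists D, perm_eq s.2 (Imp A B :: D) /\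
        perm_eq (ch 0).1 (A :: s.1) /\ perm_eq (ch 0).2 (B :: D)
  | RRefl B => Box B \in s.1 /\
        perm_eq (ch 0).1 (B :: s.1) /\ perm_eq (ch 0).2 s.2
  | RBox Pi A => exists G D, perm_eq s.1 (G ++ map Box Pi) /\
        perm_eq s.2 (Box A :: D) /\
        perm_eq (ch 0).1 s.1 /\ perm_eq (ch 0).2 (A :: D) /\
        perm_eq (ch 1).1 (map Box Pi) /\ perm_eq (ch 1).2 [:: A]
  end.

(* A (possibly infinite) tree of sequents: nodes are addressed by positions
   w : seq nat (path from the root), each labelled by a sequent and a rule;
   the children of w are rcons w i for i < arity (label w). *)
Record ptree := PTree { seqt : seq nat -> sequent; rl : seq nat -> rule }.

Fixpoint indom_aux (P : ptree) (pre w : seq nat) : bool :=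
  match w with
  | [::] => true
  | i :: w' => (i < arity (rl P pre)) && indom_aux P (rcons pre i) w'
  end.

Definition indom (P : ptree) (w : seq nat) : bool := indom_aux P [::] w.

Definition is_box (r : rule) : bool := if r is RBox _ _ then true else false.

Definition bpos (f : nat -> nat) (n : nat) : seq nat := mkseq f n.

Definition inf_branch (P : ptree) (f : nat -> nat) : Prop :=
  forall n, f n < arity (rl P (bpos f n)).

(* the branch passes through a right premise of (Box) infinitely often *)
Definition good_branch (P : ptree) (f : nat -> nat) : Prop :=
  forall n, exists m, n <= m /\ is_box (rl P (bpos f m)) /\ f m = 1.

Definition inf_proof (P : ptree) : Prop :=
  (forall w, indom P w -> local_ok (seqt P w) (rl P w) (fun i => seqt P (rcons w i)))
  /\ (forall f, inf_branch P f -> good_branch P f).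

Definition provable (G D : seq form) : Prop :=
  exists P, inf_proof P /\ seqt P [::] = (G, D).

Definition slim (P : ptree) : Prop :=
  forall w, indom P w -> forall Pi A, rl P w = RBox Pi A -> uniq Pi.

(* Main.v *)
Require Import Defs.
From mathcomp Require Import all_boot.
From Stdlib Require Import ClassicalEpsilon FunctionalExtensionality.
From mathcomp Require Import zify.
Set Implicit Arguments. Unset Strict Implicit.

Lemma indom_aux_rcons P pre w i :
  indom_aux P pre (rcons w i) = indom_aux P pre w && (i < arity (rl P (pre ++ w))).
Proof.
elim: w pre => [|j w IH] pre /=; first by rewrite cats0 andbT.
by rewrite IH cat_rcons andbA.
Qed.

Lemma indom_rcons P w i : indom P (rcons w i) = indom P w && (i < arity (rl P w)).
Proof. exact: indom_aux_rcons. Qed.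

Lemma indom_nth P u m : indom P u -> m < size u -> nth 0 u m < arity (rl P (take m u)).
Proof.
elim/last_ind: u m => [|v i IH] m //.
rewrite indom_rcons size_rcons ltnS => /andP[Hv Hi] Hm.
rewrite nth_rcons -cats1 takel_cat //.
case: (ltngtP m (size v)) Hm => // [Hlt _|-> _]; first exact: IH.
by rewrite take_size.
Qed.

Fixpoint lcov (t : sequent) (F : form) {struct F} : bool :=
  (F \in t.1) || match F with Imp A B => rcov t A || lcov t B | _ => false end
with rcov (t : sequent) (F : form) {struct F} : bool :=
  (F \in t.2) || match F with Imp A B => lcov t A && rcov t B | Box A => rcov t A | _ => false end.

Definition covers (t s : sequent) : Prop :=
  (forall F, F \in s.1 -> lcov t F) /\ (forall F, F \in s.2 -> rcov t F).

Lemma lcov_imp t A B : lcov t (Imp A B) = (Imp A B \in t.1) || (rcov t A || lcov t B).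
Proof. by []. Qed.
Lemma rcov_imp t A B : rcov t (Imp A B) = (Imp A B \in t.2) || (lcov t A && rcov t B).
Proof. by []. Qed.
Lemma rcov_box t A : rcov t (Box A) = (Box A \in t.2) || rcov t A.
Proof. by []. Qed.
Lemma lcov_at t F : (if F is Imp _ _ then false else true) -> lcov t F = (F \in t.1).
Proof. by case: F => //= *; rewrite orbF. Qed.
Lemma rcov_at t F : (match F with Imp _ _ | Box _ => false | _ => true end) -> rcov t F = (F \in t.2).
Proof. by case: F => //= *; rewrite orbF. Qed.

Lemma cov_mono t t' : covers t' t -> forall F, (lcov t F -> lcov t' F) /\ (rcov t F -> rcov t' F).
Proof.
case=> H1 H2; elim=> [|p|A [IHAl IHAr] B [IHBl IHBr]|A [IHl IHr]].
- by split=> H; [apply: H1|apply: H2]; move: H; rewrite ?lcov_at ?rcov_at //.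
- by split=> H; [apply: H1|apply: H2]; move: H; rewrite ?lcov_at ?rcov_at //.
- split; [rewrite [lcov t _]lcov_imp|rewrite [rcov t _]rcov_imp]; move=> /orP[H|H].
  + exact: H1.
  + case/orP: H => H; rewrite lcov_imp; apply/orP; right; apply/orP; [left; exact: IHAr|right; exact: IHBl].
  + exact: H2.
  + case/andP: H => Ha Hb; rewrite rcov_imp; apply/orP; right; apply/andP; split; [exact: IHAl|exact: IHBr].
- split; [|rewrite [rcov t _]rcov_box].
  + move=> H; have := H1 (Box A); rewrite !lcov_at //; apply; move: H; rewrite lcov_at //.
  + case/orP=> H; first exact: H2.
    by rewrite rcov_box IHr ?orbT.
Qed.
Lemma dummy : True. Proof. by []. 
Qed.

Lemma cov_trans t t' s : covers t' t -> covers t s -> covers t' s.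
Proof.
move=> Ht [H1 H2]; split=> F HF.
- by apply: (proj1 (cov_mono Ht F)); apply: H1.
- by apply: (proj2 (cov_mono Ht F)); apply: H2.
Qed.

Lemma lcov_mem t F : F \in t.1 -> lcov t F.
Proof. by case: F => [|p|A B|A] H /=; rewrite H. Qed.
Lemma rcov_mem t F : F \in t.2 -> rcov t F.
Proof. by case: F => [|p|A B|A] H /=; rewrite H. Qed.
Lemma cov_refl t : covers t t.
Proof. by split=> F; [apply: lcov_mem|apply: rcov_mem]. Qed.

Lemma covL t s F : covers t s -> F \in s.1 -> lcov t F.
Proof. by case=> H _; apply: H. Qed.
Lemma covR t s F : covers t s -> F \in s.2 -> rcov t F.
Proof. by case=> _ H; apply: H. Qed.

Lemma covers_of t' s L1 L2 : perm_eq s.1 L1 -> perm_eq s.2 L2 ->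
  (forall F, F \in L1 -> lcov t' F) -> (forall F, F \in L2 -> rcov t' F) -> covers t' s.
Proof. by move=> /perm_mem P1 /perm_mem P2 H1 H2; split=> F; [rewrite P1|rewrite P2]; auto. Qed.

Lemma cov_rem1 t t' X : (forall F, F \in t.1 -> F != X -> F \in t'.1) -> lcov t' X ->
  {subset t.2 <= t'.2} -> covers t' t.
Proof.
move=> H1 HX H2; split=> F HF; last by apply: rcov_mem; apply: H2.
by case: (eqVneq F X) => [->//|Hne]; apply: lcov_mem; apply: H1.
Qed.

Lemma cov_rem2 t t' X : {subset t.1 <= t'.1} -> (forall F, F \in t.2 -> F != X -> F \in t'.2) -> rcov t' X ->
  covers t' t.
Proof.
move=> H1 H2 HX; split=> F HF; first by apply: lcov_mem; apply: H1.
by case: (eqVneq F X) => [->//|Hne]; apply: rcov_mem; apply: H2.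
Qed.

Definition act_r (r : rule) (t : sequent) : option nat :=
  match r with
  | RImpL A B => if Imp A B \in t.1 then None else if lcov t B then Some 0 else Some 1
  | RImpR A B => if Imp A B \in t.2 then None else Some 0
  | RBox Pi A => if Box A \in t.2 then None else Some 0
  | _ => None
  end.

Definition emit_rule (r : rule) : rule :=
  match r with RBox Pi A => RBox (undup Pi) A | r => r end.

Definition child_t (r : rule) (t : sequent) (i : nat) : sequent :=
  match r with
  | RImpL A B => if i == 0 then (B :: rem (Imp A B) t.1, t.2) else (rem (Imp A B) t.1, A :: t.2)
  | RImpR A B => (A :: t.1, B :: rem (Imp A B) t.2)
  | RRefl B => (B :: t.1, t.2)
  | RBox Pi A => if i == 0 then (t.1, A :: rem (Box A) t.2) else (map Box (undup Pi), [:: A])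
  | _ => t
  end.

Lemma emit_arity r : arity (emit_rule r) = arity r.
Proof. by case: r. Qed.

Lemma act_arity r t i : act_r r t = Some i -> i < arity r.
Proof.
case: r => //= [A B|A B|Pi A].
- by case: ifP => // _; case: ifP => _ [<-].
- by case: ifP => // _ [<-].
- by case: ifP => // _ [<-].
Qed.

Lemma act_box Pi A t i : act_r (RBox Pi A) t = Some i -> i = 0.
Proof. by rewrite /=; case: ifP => // _ [<-]. Qed.

Lemma skip_cov s r ch t i : local_ok s r ch -> covers t s -> act_r r t = Some i -> covers t (ch i).
Proof.
case: r => //= [A B|A B|Pi A].
- case=> G [P1 [P01 [P02 [P11 P12]]]] Hc.
  have HG F : F \in G -> lcov t F.
    by move=> HF; apply: (covL Hc); rewrite (perm_mem P1) in_cons HF orbT.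
  have HX : lcov t (Imp A B) by apply: (covL Hc); rewrite (perm_mem P1) mem_head.
  case: ifP => // HN; case: ifP => HB [<-].
  + apply: (covers_of P01 P02) => F; last exact: covR.
    by rewrite in_cons => /orP[/eqP->|]; [|apply: HG].
  + move: HX; rewrite lcov_imp HB HN orbF /= => HA.
    apply: (covers_of P11 P12) => F; first exact: HG.
    by rewrite in_cons => /orP[/eqP->|]; [|apply: covR].
- case=> D [P1 [P01 P02]] Hc.
  have HX : rcov t (Imp A B) by apply: (covR Hc); rewrite (perm_mem P1) mem_head.
  case: ifP => // HN [<-].
  move: HX; rewrite rcov_imp HN /= => /andP[HA HB].
  apply: (covers_of P01 P02) => F; rewrite in_cons => /orP[/eqP->//|HF].
  + exact: covL Hc HF.
  + by apply: (covR Hc); rewrite (perm_mem P1) in_cons HF orbT.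
- case=> G [D [P1 [P2 [P01 [P02 _]]]]] Hc.
  have HX : rcov t (Box A) by apply: (covR Hc); rewrite (perm_mem P2) mem_head.
  case: ifP => // HN [<-].
  move: HX; rewrite rcov_box HN /= => HA.
  apply: (covers_of P01 P02) => F; first exact: covL.
  rewrite in_cons => /orP[/eqP->//|HF].
  by apply: (covR Hc); rewrite (perm_mem P2) in_cons HF orbT.
Qed.

Lemma ex_perm_cat (u t : seq form) : uniq u -> {subset u <= t} -> exists G, perm_eq t (G ++ u).
Proof.
elim: u t => [|x u IH] t /=; first by move=> _ _; exists t; rewrite cats0.
case/andP=> Hx Hu Hsub.
have Hxt : x \in t by apply: Hsub; rewrite mem_head.
have [G HG] : exists G, perm_eq (rem x t) (G ++ u).
  apply: IH => // y Hy; apply: rem_mem; first by apply/eqP => Hyx; rewrite -Hyx Hy in Hx.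
  by apply: Hsub; rewrite in_cons Hy orbT.
exists G; apply: (perm_trans (perm_to_rem Hxt)).
rewrite perm_sym -(cat1s x u) perm_catCA /= perm_cons perm_sym; exact: HG.
Qed.

Lemma emit_cov s r ch t i : local_ok s r ch -> covers t s -> act_r r t = None -> i < arity r ->
  covers (child_t r t i) (ch i).
Proof.
case: r => //= [A B|A B|B|Pi A].
- case=> G [P1 [P01 [P02 [P11 P12]]]] Hc.
  case: ifP => [HN _|_]; last by case: ifP.
  case: i => [|[|i]] //= _.
  + set t0 := (B :: rem (Imp A B) t.1, t.2).
    have Ht : covers t0 t.
      apply: (@cov_rem1 _ _ (Imp A B)) => //.
      * by move=> F HF Hne; rewrite /= in_cons rem_mem ?orbT.
      * by rewrite lcov_imp (@lcov_mem _ B) ?orbT // mem_head.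
    have Hs := cov_trans Ht Hc.
    apply: (covers_of P01 P02) => F; last exact: covR.
    rewrite in_cons => /orP[/eqP->|HF]; first by apply: lcov_mem; rewrite mem_head.
    by apply: (covL Hs); rewrite (perm_mem P1) in_cons HF orbT.
  + set t0 := (rem (Imp A B) t.1, A :: t.2).
    have Ht : covers t0 t.
      apply: (@cov_rem1 _ _ (Imp A B)) => //.
      * by move=> F HF Hne; rewrite /= rem_mem.
      * by rewrite lcov_imp (@rcov_mem _ A) ?orbT // mem_head.
      * by move=> F HF; rewrite /= in_cons HF orbT.
    have Hs := cov_trans Ht Hc.
    apply: (covers_of P11 P12) => F.
    * by move=> HF; apply: (covL Hs); rewrite (perm_mem P1) in_cons HF orbT.
    rewrite in_cons => /orP[/eqP->|HF]; first by apply: rcov_mem; rewrite mem_head.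
    exact: (covR Hs).
- case=> D [P1 [P01 P02]] Hc.
  case: ifP => // HN _.
  case: i => [|i] //= _.
  set t0 := (A :: t.1, B :: rem (Imp A B) t.2).
  have Ht : covers t0 t.
    apply: (@cov_rem2 _ _ (Imp A B)).
    * by move=> F HF; rewrite /= in_cons HF orbT.
    * by move=> F HF Hne; rewrite /= in_cons rem_mem ?orbT.
    * by rewrite rcov_imp (@lcov_mem _ A) ?(@rcov_mem _ B) ?orbT // mem_head.
  have Hs := cov_trans Ht Hc.
  apply: (covers_of P01 P02) => F; rewrite in_cons => /orP[/eqP->|HF].
  + by apply: lcov_mem; rewrite mem_head.
  + exact: (covL Hs).
  + by apply: rcov_mem; rewrite mem_head.
  + by apply: (covR Hs); rewrite (perm_mem P1) in_cons HF orbT.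
- case=> HB [P01 P02] Hc _.
  case: i => [|i] //= _.
  set t0 := (B :: t.1, t.2).
  have Ht : covers t0 t.
    split=> F HF; [apply: lcov_mem; by rewrite /= in_cons HF orbT|exact: rcov_mem].
  have Hs := cov_trans Ht Hc.
  apply: (covers_of P01 P02) => F; last exact: (covR Hs).
  rewrite in_cons => /orP[/eqP->|HF]; first by apply: lcov_mem; rewrite mem_head.
  exact: (covL Hs).
- case=> G [D [P1 [P2 [P01 [P02 [P11 P12]]]]]] Hc.
  case: ifP => // HN _.
  case: i => [|[|i]] //= _.
  + set t0 := (t.1, A :: rem (Box A) t.2).
    have Ht : covers t0 t.
      apply: (@cov_rem2 _ _ (Box A)) => //.
      * by move=> F HF Hne; rewrite /= in_cons rem_mem ?orbT.
      * by rewrite rcov_box (@rcov_mem _ A) ?orbT // mem_head.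
    have Hs := cov_trans Ht Hc.
    apply: (covers_of P01 P02) => F; first exact: (covL Hs).
    rewrite in_cons => /orP[/eqP->|HF]; first by apply: rcov_mem; rewrite mem_head.
    by apply: (covR Hs); rewrite (perm_mem P2) in_cons HF orbT.
  + apply: (covers_of P11 P12) => F.
    * move=> /mapP[C HC ->]; apply: lcov_mem; rewrite /=.
      by apply/mapP; exists C; rewrite ?mem_undup.
    * by move=> HF; apply: rcov_mem.
Qed.

Lemma emit_ok s r ch t : local_ok s r ch -> covers t s -> act_r r t = None ->
  local_ok t (emit_rule r) (child_t r t).
Proof.
case: r => /= [p||A B|A B|B|Pi A].
- case=> H1 H2 Hc _; split.
  + by move: (covL Hc H1); rewrite lcov_at.
  + by move: (covR Hc H2); rewrite rcov_at.
- by move=> H1 Hc _; move: (covL Hc H1); rewrite lcov_at.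
- move=> _ Hc; case: ifP => [HN _|_]; last by case: ifP.
  exists (rem (Imp A B) t.1); split; first exact: perm_to_rem.
  by rewrite !perm_refl.
- move=> _ Hc; case: ifP => // HN _.
  exists (rem (Imp A B) t.2); split; first exact: perm_to_rem.
  by rewrite !perm_refl.
- case=> HB _ Hc _; split; first by move: (covL Hc HB); rewrite lcov_at.
  by rewrite !perm_refl.
- case=> G [D [P1 [P2 _]]] Hc; case: ifP => // HN _.
  have [G' HG'] : exists G', perm_eq t.1 (G' ++ map Box (undup Pi)).
    apply: ex_perm_cat.
    + by rewrite map_inj_uniq ?undup_uniq // => x y [].
    + move=> F /mapP[C HC ->]; rewrite mem_undup in HC.
      have : lcov t (Box C).
        by apply: (covL Hc); rewrite (perm_mem P1) mem_cat map_f ?orbT.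
      by rewrite lcov_at.
  exists G', (rem (Box A) t.2); split; first exact: HG'.
  split; first exact: perm_to_rem.
  by rewrite !perm_refl.
Qed.

Section Branch.
Variable V : nat -> seq nat.
Hypothesis Vpre : forall n, exists s, V n.+1 = V n ++ s.
Hypothesis Vsize : forall n, n < size (V n.+1).

Lemma V_le a b : a <= b -> exists s, V b = V a ++ s.
Proof.
elim: b => [|b IH]; first by rewrite leqn0 => /eqP->; exists [::]; rewrite cats0.
rewrite leq_eqVlt => /orP[/eqP->|Hab]; first by exists [::]; rewrite cats0.
have [s1 E1] := IH Hab; have [s2 E2] := Vpre b.
by exists (s1 ++ s2); rewrite E2 E1 catA.
Qed.

Lemma V_nth a b m : m < size (V a) -> m < size (V b) -> nth 0 (V a) m = nth 0 (V b) m.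
Proof.
wlog Hab : a b / a <= b => [W|].
  by case: (leqP a b) => H Ha Hb; [apply: W|symmetry; apply: W => //; apply: ltnW].
move=> Ha _; have [s ->] := V_le Hab; by rewrite nth_cat Ha.
Qed.

Definition gV m := nth 0 (V m.+1) m.

Lemma gV_spec m N : m < size (V N) -> bpos gV m = take m (V N) /\ gV m = nth 0 (V N) m.
Proof.
have Hg j : j < size (V N) -> gV j = nth 0 (V N) j.
  by move=> Hj; apply: V_nth => //; apply: Vsize.
move=> Hm; split; last exact: Hg.
apply: (@eq_from_nth _ 0); first by rewrite size_mkseq size_take Hm.
move=> j; rewrite size_mkseq => Hj.
by rewrite nth_mkseq // nth_take // Hg // (ltn_trans Hj Hm).
Qed.

Lemma gV_branch P : (forall n, indom P (V n)) -> inf_branch P gV.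
Proof.
move=> HD m; have [-> ->] := gV_spec (Vsize m).
exact: indom_nth (HD _) (Vsize m).
Qed.
End Branch.

Fixpoint chain (P : ptree) (t : sequent) (v : seq nat) (k : nat) : seq nat :=
  if k is k'.+1 then
    let c := chain P t v k' in
    if act_r (rl P c) t is Some i then rcons c i else c
  else v.

Definition norm P v t :=
  chain P t v (epsilon (inhabits 0) (fun k => act_r (rl P (chain P t v k)) t = None)).

Lemma chain_pre P t v k : exists s, chain P t v k = v ++ s /\
  forall j, size v <= j < size (chain P t v k) ->
    act_r (rl P (take j (chain P t v k))) t = Some (nth 0 (chain P t v k) j).
Proof.
elim: k => [|k [s [Es IH]]] /=.
  by exists [::]; rewrite cats0; split=> // j /andP[H1 H2]; rewrite ltnNge H1 in H2.
case E : (act_r _ t) => [i|]; last by exists s.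
exists (rcons s i); split; first by rewrite Es rcons_cat.
move=> j /andP[H1]; rewrite size_rcons ltnS leq_eqVlt => /orP[/eqP Hj|Hj].
- by rewrite Hj -cats1 takel_cat // take_size nth_cat ltnn subnn.
- by rewrite -cats1 takel_cat ?(ltnW Hj) // nth_cat Hj IH // H1.
Qed.

Lemma chain_inv P t v k : inf_proof P -> indom P v -> covers t (seqt P v) ->
  indom P (chain P t v k) /\ covers t (seqt P (chain P t v k)).
Proof.
case=> Hok _ Hv Hc; elim: k => [|k [IHd IHc]] //=.
case E : (act_r _ t) => [i|] //; split.
- by rewrite indom_rcons IHd (act_arity E).
- exact: skip_cov (Hok _ IHd) IHc E.
Qed.

Lemma chain_dom P t v k : inf_proof P -> indom P v -> indom P (chain P t v k).
Proof.
move=> _ Hv; elim: k => [|k IHd] //=.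
case E : (act_r _ t) => [i|] //.
by rewrite indom_rcons IHd (act_arity E).
Qed.

Lemma norm_done P t v : inf_proof P -> indom P v -> act_r (rl P (norm P v t)) t = None.
Proof.
move=> HP Hv; rewrite /norm.
apply: (@epsilon_spec nat (inhabits 0) (fun k => act_r (rl P (chain P t v k)) t = None)).
apply: NNPP => Hne.
have Hall k : exists i, act_r (rl P (chain P t v k)) t = Some i.
  case E : (act_r _ t) => [i|]; first by exists i.
  by case: Hne; exists k.
have Hstep k : exists i, chain P t v k.+1 = rcons (chain P t v k) i /\
    act_r (rl P (chain P t v k)) t = Some i.
  by have [i Ei] := Hall k; exists i; rewrite /= Ei.
have Hsize k : size (chain P t v k) = size v + k.
  elim: k => [|k IH]; first by rewrite addn0.
  by have [i [-> _]] := Hstep k; rewrite size_rcons IH addnS.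
pose W k := chain P t v k.+1.
have Wpre n : exists s, W n.+1 = W n ++ s.
  by have [i [E _]] := Hstep n.+1; exists [:: i]; rewrite /W E cats1.
have Wsize n : n < size (W n.+1) by rewrite /W Hsize; lia.
have HD n : indom P (W n) by exact: chain_dom.
have [m [Hm [Hbox Hg1]]] := proj2 HP _ (gV_branch Wpre Wsize HD) (size v).
have HmW : m < size (W m) by rewrite /W Hsize; lia.
have [Eb Eg] := gV_spec Wpre Wsize HmW.
rewrite Eb in Hbox; rewrite Eg in Hg1.
have [s [_ Hact]] := chain_pre P t v m.+1.
have := Hact m; rewrite -/(W m) Hm HmW => /(_ isT).
case: (rl P (take m (W m))) Hbox => // Pi A _ /act_box.
by rewrite Hg1.
Qed.

Lemma norm_pre P v t : exists s, norm P v t = v ++ s /\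
  forall j, size v <= j < size (norm P v t) ->
    act_r (rl P (take j (norm P v t))) t = Some (nth 0 (norm P v t) j).
Proof. exact: chain_pre. Qed.

Lemma norm_inv P t v : inf_proof P -> indom P v -> covers t (seqt P v) ->
  [/\ indom P (norm P v t), covers t (seqt P (norm P v t)) & act_r (rl P (norm P v t)) t = None].
Proof.
move=> HP Hv Hc; have [H1 H2] := chain_inv (epsilon (inhabits 0)
  (fun k => act_r (rl P (chain P t v k)) t = None)) HP Hv Hc.
by split => //; apply: norm_done.
Qed.

Definition stepS P (st : seq nat * sequent) (i : nat) : seq nat * sequent :=
  let t' := child_t (rl P st.1) st.2 i in (norm P (rcons st.1 i) t', t').

Definition stt P w := foldl (stepS P) (norm P [::] (seqt P [::]), seqt P [::]) w.

Definition newP P := PTree (fun w => (stt P w).2) (fun w => emit_rule (rl P (stt P w).1)).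

Lemma stt_rcons P w i : stt P (rcons w i) = stepS P (stt P w) i.
Proof. by rewrite /stt foldl_rcons. Qed.

Lemma inv_all P : inf_proof P -> forall w, indom (newP P) w ->
  [/\ indom P (stt P w).1, covers (stt P w).2 (seqt P (stt P w).1)
    & act_r (rl P (stt P w).1) (stt P w).2 = None].
Proof.
move=> HP; elim/last_ind => [|w i IH].
  by move=> _; apply: norm_inv => //; apply: cov_refl.
rewrite indom_rcons => /andP[Hw Hi]; have [Hd Hc Ha] := IH Hw.
rewrite /= emit_arity in Hi.
rewrite stt_rcons /stepS /=; apply: norm_inv => //.
- by rewrite indom_rcons Hd.
- exact: emit_cov (proj1 HP _ Hd) Hc Ha Hi.
Qed.

Lemma newP_ok P : inf_proof P -> forall w, indom (newP P) w ->
  local_ok (seqt (newP P) w) (rl (newP P) w) (fun i => seqt (newP P) (rcons w i)).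
Proof.
move=> HP w Hw; have [Hd Hc Ha] := inv_all HP Hw.
have -> : (fun i => seqt (newP P) (rcons w i)) = child_t (rl P (stt P w).1) (stt P w).2.
  by apply: functional_extensionality => i; rewrite /= stt_rcons.
exact: emit_ok (proj1 HP _ Hd) Hc Ha.
Qed.

Lemma newP_slim P : inf_proof P -> slim (newP P).
Proof.
move=> HP w Hw Pi A /=; case: (rl P (stt P w).1) => //= Pi' A' [<- _].
exact: undup_uniq.
Qed.

Lemma newP_branch P : inf_proof P -> forall f, inf_branch (newP P) f -> good_branch (newP P) f.
Proof.
move=> HP f Hf.
have Hdom n : indom (newP P) (bpos f n).
  elim: n => [|n IH] //; by rewrite /bpos mkseqS indom_rcons IH Hf.
pose U n := (stt P (bpos f n)).1.
have Ustep n : exists s, U n.+1 = U n ++ f n :: s.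
  rewrite /U /bpos mkseqS stt_rcons /stepS /=.
  have [s [-> _]] := norm_pre P (rcons (stt P (mkseq f n)).1 (f n))
     (child_t (rl P (stt P (mkseq f n)).1) (stt P (mkseq f n)).2 (f n)).
  by exists s; rewrite cat_rcons.
have Upre n : exists s, U n.+1 = U n ++ s.
  by have [s ->] := Ustep n; exists (f n :: s).
have Usz n : n <= size (U n).
  elim: n => [|n IH] //; have [s ->] := Ustep n; rewrite size_cat /=; lia.
have Vsize n : n < size (U n.+1) by apply: Usz.
have HD n : indom P (U n) by case: (inv_all HP (Hdom n)).
move=> n.
have [m [Hm [Hbox Hg1]]] := proj2 HP _ (gV_branch Upre Vsize HD) (size (U n)).
have key k : forall m, size (U n) <= m < size (U (n + k)) ->
    is_box (rl P (take m (U (n + k)))) -> nth 0 (U (n + k)) m = 1 ->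
    exists j, n <= j /\ is_box (rl (newP P) (bpos f j)) /\ f j = 1.
  elim: k => [|k IH] m'.
    by rewrite addn0 => /andP[H1 H2]; rewrite ltnNge H1 in H2.
  rewrite addnS => /andP[H1 H2].
  case: (ltnP m' (size (U (n + k)))) => H3.
    have [s Es] := Upre (n + k).
    rewrite Es takel_cat ?(ltnW H3) // nth_cat H3 => Hb Hn.
    by apply: (IH m') => //; rewrite H1 H3.
  rewrite leq_eqVlt in H3; case/orP: H3 => [/eqP H3|H3].
    have [s Es] := Ustep (n + k).
    rewrite Es -H3 takel_cat // take_size nth_cat ltnn subnn /= => Hb Hn.
    exists (n + k); split; first exact: leq_addr.
    split=> //; rewrite /=; move: Hb; rewrite /U; by case: (rl P _).
  move: H2; rewrite /U /bpos mkseqS stt_rcons /stepS /= => H2.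
  set t' := child_t _ _ _ in H2 *.
  have [s [_ Hact]] := norm_pre P (rcons (stt P (mkseq f (n + k))).1 (f (n + k))) t'.
  have := Hact m'; rewrite size_rcons H3 H2 => /(_ isT).
  case: (rl P _) => // Pi A /act_box -> _ H01.
  by [].
have HmN : m < size (U (n + m.+1)) by apply: (leq_trans _ (Usz _)); lia.
have [Eb Eg] := gV_spec Upre Vsize HmN.
rewrite Eb in Hbox; rewrite Eg in Hg1.
by apply: (key m.+1 m) => //; rewrite Hm HmN.
Qed.

Unset Implicit Arguments.
Set Strict Implicit.
Theorem lemma8p4 (G D : seq form) :
  provable G D -> exists P, inf_proof P /\ slim P /\ seqt P [::] = (G, D).
Proof.
case=> P [HP Hroot]; exists (newP P); split; last split.
- split; [exact: newP_ok|exact: newP_branch].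
- exact: newP_slim.
- by rewrite /= /stt /= Hroot.
Qed.
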